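(* Let $k\ge 3$ and let $T$ be a tree with $|V(T)|=n$ that admits a $(3,k-2)$-completion set, and let $\mathrm{OPT}$ be the size of a minimum $(3,k-2)$-completion set of $T$. Then $(n-1)\cdot\frac{k-2}{2}\le \mathrm{OPT}$.
   Context: A connected graph $H$ has a $(3,\ell)$-cover if every edge of $H$ is contained in at least $\ell$ triangles. For a connected graph $G=(V,E)$, a set $E'\subseteq (V\times V)\setminus E$ of non-edges is a $(3,\ell)$-completion set of $G$ if $G\cup E'$ has a $(3,\ell)$-cover. *)

(* Defs.v *)
(* A simple graph on a finite vertex type V is given by its
   edge set E : {set {set V}}, every edge being a 2-element subset of V. *)
From mathcomp Require Import all_boot all_order all_algebra.
Set Implicit Arguments. Unset Strict Implicit. Unset Printing Implicit Defensive.

Section Graphs.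
Variable V : finType.

Definition simple_graph (E : {set {set V}}) : bool :=
  [forall e in E, #|e| == 2].

Definition adj (E : {set {set V}}) : rel V := fun x y => [set x; y] \in E.

Definition connected_graph (E : {set {set V}}) : bool :=
  (0 < #|V|) && [forall x, forall y, connect (adj E) x y].

Definition has_cycle (E : {set {set V}}) : Prop :=
  exists p : seq V, [/\ 3 <= size p, uniq p & cycle (adj E) p].

Definition is_tree (E : {set {set V}}) : Prop :=
  [/\ simple_graph E, connected_graph E & ~ has_cycle E].

Definition ntri (H : {set {set V}}) (u v : V) : nat :=
  #|[set w | ([set u; w] \in H) && ([set v; w] \in H)]|.

Definition has_cover3 (l : nat) (H : {set {set V}}) : Prop :=
  connected_graph H /\
  forall u v : V, [set u; v] \in H -> u != v -> l <= ntri H u v.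

Definition completion_set (l : nat) (G E' : {set {set V}}) : Prop :=
  [/\ simple_graph E', [disjoint E' & G] & has_cover3 l (G :|: E')].

Definition min_completion_set (l : nat) (G E' : {set {set V}}) : Prop :=
  completion_set l G E' /\
  forall F : {set {set V}}, completion_set l G F -> #|E'| <= #|F|.
End Graphs.

(* Main.v *)
Require Import Defs.
From mathcomp Require Import all_boot all_order all_algebra zify.
Import Order.TTheory GRing.Theory Num.Theory.
Set Implicit Arguments. Unset Strict Implicit. Unset Printing Implicit Defensive.

Lemma simpleP (V : finType) (E : {set {set V}}) e :
  simple_graph E -> e \in E -> #|e| = 2.
Proof. by move=> /forall_inP h /h /eqP. Qed.

Lemma adjC (V : finType) (E : {set {set V}}) x y : adj E x y = adj E y x.
Proof. by rewrite /adj setUC. Qed.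

Lemma adj_irr (V : finType) (E : {set {set V}}) x :
  simple_graph E -> adj E x x = false.
Proof.
move=> sE; apply/negbTE/negP => h.
by have := simpleP sE h; rewrite setUid cards1.
Qed.

Lemma set2_inj (V : finType) (x y y' : V) : [set x; y] = [set x; y'] -> y = y'.
Proof.
move=> h. have: y \in [set x; y'] by rewrite -h !inE eqxx orbT.
rewrite !inE => /orP [/eqP yx | /eqP //].
have: y' \in [set x; y] by rewrite h !inE eqxx orbT.
by rewrite yx !inE orbb => /eqP ->.
Qed.

Lemma cycle_of_deg2 (V : finType) (E : {set {set V}}) (S : {set V}) :
  simple_graph E -> S != set0 ->
  (forall x, x \in S -> 1 < #|[set y in S | adj E x y]|) -> has_cycle E.
Proof.
move=> sE /set0Pn [x0 x0S] deg.
pose P m := [exists x, exists t : m.-tuple V,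
  [&& uniq (x :: t), all (mem S) (x :: t) & path (adj E) x t]].
have P0 : exists m, P m.
  exists 0; apply/existsP; exists x0; apply/existsP; exists [tuple].
  by rewrite /= x0S.
have Pb : forall m, P m -> m <= #|V|.
  move=> m /existsP [x /existsP [t /and3P [u _ _]]].
  have := max_card (mem (x :: t)). rewrite (card_uniqP u) /= size_tuple.
  by move/ltnW.
case: (ex_maxnP P0 Pb) => m /existsP [x /existsP [t /and3P [ut allS pt]]] maxm.
have xS : x \in S by move: allS => /= /andP [].
have adjx : forall y, y \in S -> adj E x y -> y \in (t : seq V).
  move=> y yS axy; apply/negPn/negP => yt.
  have yx : y != x.
    by apply/eqP => yx; move: axy; rewrite yx adj_irr.
  have : P m.+1.
    apply/existsP; exists y; apply/existsP; exists [tuple of x :: t].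
    rewrite /= yS; move: allS ut => /= -> /= -> /=; rewrite pt adjC axy !andbT /=.
    by rewrite inE negb_or yx yt.
  by move/maxm; rewrite ltnn.
have dx := deg x xS.
set N := [set y in S | adj E x y] in dx.
clear allS; move: ut pt adjx; case: t => [s ss] /=.
case: s ss => [|x1 s1] ss ut pt adjx.
  case/card_gt0P: (ltnW dx) => y; rewrite inE => /andP [yS axy].
  by have := adjx y yS axy.
have : 0 < #|N :\ x1| by move: dx; rewrite (cardsD1 x1); case: (x1 \in N) => /= h; lia.
case/card_gt0P => y; rewrite !inE => /andP [yx1 /andP [yS axy]].
have : y \in s1 by have := adjx y yS axy; rewrite inE (negbTE yx1).
move=> yin; move: ut pt; case/splitPr: yin => a b.
rewrite -cat_rcons => ut pt.
exists (x :: x1 :: rcons a y); split.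
- by rewrite /= size_rcons.
- by move: ut; rewrite -[_ && _]/(uniq ((x :: x1 :: rcons a y) ++ b)) cat_uniq => /andP [].
- rewrite /cycle rcons_path; apply/andP; split.
    by move: pt; rewrite -[path _ _ _]/(path (adj E) x ((x1 :: rcons a y) ++ b)) cat_path => /andP [].
  by rewrite /= last_rcons adjC.
Qed.

Lemma forest_edges (V : finType) (E : {set {set V}}) :
  simple_graph E -> ~ has_cycle E -> forall S : {set V},
  0 < #|S| -> #|[set e in E | e \subset S]| < #|S|.
Proof.
move=> sE nc S.
have [n cS] : exists n, #|S| = n by eexists.
rewrite cS; elim: n S cS => [S _ h|n IH S cS _]; first by [].
case: n IH cS => [|n] IH cS.
  rewrite ltnS leqn0 cards_eq0; apply/eqP/setP => e; rewrite !inE.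
  apply/negbTE/andP => [[eE sub]]; have := subset_leq_card sub.
  by rewrite (simpleP sE eE) cS.
have [x xS dx] : exists2 x, x \in S & #|[set y in S | adj E x y]| <= 1.
  case: (boolP [exists x in S, #|[set y in S | adj E x y]| <= 1]).
    by case/exists_inP => x xS d; exists x.
  move/exists_inPn => h; exfalso; apply: nc; apply: (@cycle_of_deg2 _ _ S sE).
    by rewrite -card_gt0 cS.
  by move=> x xS; have := h x xS; rewrite ltnNge.
have cS' : #|S :\ x| = n.+1 by move: cS; rewrite (cardsD1 x) xS add1n => -[].
have := IH (S :\ x) cS' isT.
have sub : [set e in E | e \subset S] \subset
   [set e in E | e \subset S :\ x] :|: [set [set x; y] | y in [set y in S | adj E x y]].
  apply/subsetP => e; rewrite inE => /andP [eE eS]; rewrite inE.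
  case: (boolP (x \in e)) => xe; last first.
    rewrite inE eE /=; apply/orP; left; apply/subsetP => z ze.
    rewrite !inE (subsetP eS _ ze) andbT; apply/eqP => zx; move: xe; by rewrite -zx ze.
  apply/orP; right.
  have /cards2P [a [b [ab eab]]] : #|e| == 2 by rewrite (simpleP sE eE).
  move: xe eS eE; rewrite eab !inE => /orP [] /eqP -> eS eE.
    apply/imsetP; exists b => //; rewrite inE (subsetP eS) ?inE ?eqxx ?orbT //.
  apply/imsetP; exists a; last by rewrite setUC.
  by rewrite inE (subsetP eS) ?inE ?eqxx ?orbT //= adjC.
move=> h3.
have h1 := leq_imset_card (fun y => [set x; y]) [set y in S | adj E x y].
apply: (leq_ltn_trans (subset_leq_card sub)).
apply: (leq_ltn_trans (leq_of_leqif (leq_card_setU _ _))).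
have := leq_add h3 (leq_trans h1 dx); by rewrite addSn addn1.
Qed.

Lemma conn_edges (V : finType) (E : {set {set V}}) :
  connected_graph E -> #|V|.-1 <= #|E|.
Proof.
move=> /andP [n0 /forallP c].
have /card_gt0P [r _] := n0.
pose P x m := [exists t : m.-tuple V, path (adj E) x t && (last x t == r)].
have hex x : exists m, P x m.
  have := forallP (c x) r; case/connectP => p pp lp.
  by exists (size p); apply/existsP; exists (in_tuple p); rewrite /= pp -lp eqxx.
pose d x := ex_minn (hex x).
have dP x : P x (d x) /\ forall m, P x m -> d x <= m.
  by rewrite /d; case: ex_minnP.
have par x : x != r -> exists2 y, adj E x y & d y < d x.
  move=> xr; case: (dP x) => /existsP [t /andP [pt lt]] _.
  move: pt lt; case: t => [[|y s] st] /=.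
    by move=> _ /eqP xr'; move: xr; rewrite xr' eqxx.
  move=> /andP [axy ps] ls; exists y => //.
  have : P y (size s) by apply/existsP; exists (in_tuple s); rewrite /= ps ls.
  move/(proj2 (dP y)) => h; move/eqP: st => /= <-; by rewrite ltnS.
pose f x := [set x; odflt x [pick y | adj E x y && (d y < d x)]].
have fP x : x != r -> exists2 y, f x = [set x; y] & adj E x y && (d y < d x).
  move=> xr; rewrite /f; case: pickP => [y hy | none] /=; first by exists y.
  by case: (par x xr) => y a b; move: (none y); rewrite a b.
have inj : {in [set~ r] &, injective f}.
  move=> x x'; rewrite !inE => xr x'r.
  case: (fP x xr) => y -> /andP [_ dy]; case: (fP x' x'r) => y' -> /andP [_ dy'] h.
  apply/eqP/negP => /negP xx'.
  have : x \in [set x'; y'] by rewrite -h !inE eqxx.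
  rewrite !inE (negbTE xx') /= => /eqP exy'.
  have : x' \in [set x; y] by rewrite h !inE eqxx.
  rewrite !inE eq_sym (negbTE xx') /= => /eqP exy.
  by move: dy dy'; rewrite -exy -exy'; lia.
rewrite -(cardsC1 r) -(card_in_imset inj); apply: subset_leq_card.
apply/subsetP => z /imsetP [x]; rewrite !inE => xr ->.
by case: (fP x xr) => y -> /andP [].
Qed.

Lemma per_vertex (V : finType) (T E' : {set {set V}}) (w : V) :
  simple_graph T -> ~ has_cycle T -> simple_graph E' ->
  #|[set e in T | e \subset [set y | [set w; y] \in T :|: E']]|
    <= #|[set e in E' | w \in e]|.
Proof.
move=> sT nc sE.
set N := [set y | [set w; y] \in T :|: E'].
have wN : w \notin N.
  rewrite inE setUid inE; apply/negP => /orP [] h.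
    by have := simpleP sT h; rewrite cards1.
  by have := simpleP sE h; rewrite cards1.
have fe := forest_edges sT nc (S := w |: N).
rewrite cardsU1 wN add1n in fe; have {}fe := fe isT.
set A := [set e in T | e \subset N].
set B := [set e in T | w \in e].
set C := [set e in E' | w \in e].
have AB : #|A| + #|B| <= #|[set e in T | e \subset w |: N]|.
  have -> : #|A| + #|B| = #|A :|: B|.
    rewrite cardsU; suff -> : A :&: B = set0 by rewrite cards0 subn0.
    apply/setP => e; rewrite !inE; apply/negbTE/andP => [[/andP [_ eN] /andP [_ we]]].
    by move: wN; rewrite (subsetP eN _ we).
  apply: subset_leq_card; apply/subsetP => e; rewrite !inE => /orP [] /andP [eT].
    by move=> eN; rewrite eT /=; apply: (subset_trans eN); apply: subsetUr.
  move=> we; rewrite eT /=.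
  have /cards2P [a [b [ab eab]]] : #|e| == 2 by rewrite (simpleP sT eT).
  move: we eT; rewrite eab !inE => /orP [] /eqP <- eT; apply/subsetP => z.
    rewrite !inE => /orP [] /eqP ->; first by rewrite eqxx.
    by apply/orP; right; rewrite eT.
  rewrite !inE => /orP [] /eqP ->; last by rewrite eqxx.
  by apply/orP; right; rewrite setUC eT.
have NC : #|N| <= #|B| + #|C|.
  have inj : {in N &, injective (fun y => [set w; y])} by move=> y y' _ _; apply: set2_inj.
  rewrite -(card_in_imset inj).
  apply: (leq_trans _ (leq_of_leqif (leq_card_setU B C))); apply: subset_leq_card.
  apply/subsetP => z /imsetP [y]; rewrite inE => yH ->.
  by move: yH; rewrite !inE eqxx /= => /orP [] ->; rewrite ?orbT.
move: AB NC fe; lia.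
Qed.

Lemma card_set_sum (J : finType) (Q : pred J) : #|[set j | Q j]| = \sum_j (Q j : nat).
Proof.
rewrite -sum1_card big_mkcond /=; apply: eq_bigr => j _; rewrite inE; by case: (Q j).
Qed.

Lemma dc (I J : finType) (P : I -> J -> bool) (A : {set I}) :
  \sum_(i in A) #|[set j | P i j]| = \sum_j #|[set i in A | P i j]|.
Proof.
under eq_bigr do rewrite card_set_sum.
rewrite exchange_big /=; apply: eq_bigr => j _.
rewrite card_set_sum big_mkcond /=; apply: eq_bigr => i _.
by case: (i \in A).
Qed.

Local Open Scope ring_scope.
Theorem corollary1 (V : finType) (k : nat) (T : {set {set V}}) :
  (3 <= k)%N -> is_tree T ->
  (exists E' : {set {set V}}, completion_set (k - 2) T E') ->
  forall OPTset : {set {set V}}, min_completion_set (k - 2) T OPTset ->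
  ((#|V|%:R - 1) * ((k%:R - 2) / 2) <= (#|OPTset|%:R : rat)).
Proof.
move=> k3 [sT cT nc] _ OPT [[sE dis [cH cov]] _].
set l := (k - 2)%N.
set H := T :|: OPT.
pose N w := [set y | [set w; y] \in H].
have h1 : (#|V|.-1 <= #|T|)%N := conn_edges cT.
have h2 : (#|T| * l <= \sum_(e in T) #|[set w | e \subset N w]|)%N.
  rewrite -sum_nat_const; apply: leq_sum => e eT.
  have /cards2P [u [v [uv euv]]] : #|e| == 2 by rewrite (simpleP sT eT).
  have eH : [set u; v] \in H by rewrite inE -euv eT.
  apply: (leq_trans (cov u v eH uv)); rewrite /ntri euv.
  apply: eq_leq; apply: eq_card => w; rewrite !inE subUset !sub1set !inE.
  by rewrite (setUC [set u]) (setUC [set v]).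
have h3 := dc (fun (e : {set V}) (w : V) => e \subset N w) T.
have h4 : (\sum_w #|[set e in T | e \subset N w]| <= \sum_w #|[set e in OPT | w \in e]|)%N.
  by apply: leq_sum => w _; apply: per_vertex.
have h5 : (\sum_w #|[set e in OPT | w \in e]| = #|OPT| * 2)%N.
  rewrite -(dc (fun (e : {set V}) (w : V) => w \in e) OPT) -sum_nat_const; apply: eq_bigr => e eO.
  rewrite -(simpleP sE eO); apply: eq_card => w; by rewrite inE.
have hn : (#|V|.-1 * l <= #|OPT| * 2)%N.
  apply: (leq_trans (leq_mul h1 (leqnn l))); rewrite -h5; apply: (leq_trans h2).
  by rewrite h3 h4.
have n0 : (0 < #|V|)%N by case/andP: cT.
rewrite -(prednK n0) -natr1 addrK.
have -> : (k%:R - 2 : rat) = l%:R by rewrite /l natrB ?(leq_trans _ k3).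
rewrite mulrA ler_pdivrMr // -!natrM ler_nat.
exact: hn.
Qed.
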